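(* Let $Q$ be a right Leibniz algebra which is a weak algebra of quotients of its subalgebra $L$, and let $I$ be an ideal of $L$. If $\mathrm{Ann}_L(I)=\{0\}$ then $\mathrm{Ann}_Q(I)=\{0\}$, and if $\mathrm{ran}_L(I)=\{0\}$ then $\mathrm{ran}_Q(I)=\{0\}$.
   Context: A right Leibniz algebra satisfies $[x,[y,z]]=[[x,y],z]-[[x,z],y]$. Ideals of $L$: subspaces $I$ with $[I,L]\subseteq I$, $[L,I]\subseteq I$. For $X\in\{L,Q\}$: $\mathrm{ran}_X(I)=\{u\in X:[y,u]=0\ \forall y\in I\}$, $\mathrm{Ann}_X(I)=\{u\in X:[u,y]=[y,u]=0\ \forall y\in I\}$. $Q$ is a weak algebra of quotients of $L$ if for every $0\ne q\in Q$ there is $x\in L$ with $0\ne[q,x]\in L$ or $y\in L$ with $0\ne[y,q]\in L$. *)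

(* Defs.v *)
From mathcomp Require Import all_boot all_algebra.
Set Implicit Arguments. Unset Strict Implicit. Unset Printing Implicit Defensive.
Import GRing.Theory.
Local Open Scope ring_scope.

Definition bilinear_bracket (K : fieldType) (V : lmodType K) (br : V -> V -> V) :=
  (forall a x y z, br (a *: x + y) z = a *: br x z + br y z) /\
  (forall a x y z, br x (a *: y + z) = a *: br x y + br x z).

Definition right_leibniz (K : fieldType) (V : lmodType K) (br : V -> V -> V) :=
  bilinear_bracket br /\
  forall x y z, br x (br y z) = br (br x y) z - br (br x z) y.

Definition subspace (K : fieldType) (V : lmodType K) (S : V -> Prop) :=
  S 0 /\ (forall a x y, S x -> S y -> S (a *: x + y)).

Definition subalgebra (K : fieldType) (V : lmodType K) (br : V -> V -> V)
    (L : V -> Prop) :=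
  subspace L /\ forall x y, L x -> L y -> L (br x y).

Definition ideal_of (K : fieldType) (V : lmodType K) (br : V -> V -> V)
    (L I : V -> Prop) :=
  subspace I /\ (forall x, I x -> L x) /\
  (forall x y, I x -> L y -> I (br x y)) /\
  (forall x y, L x -> I y -> I (br x y)).

Definition ran (K : fieldType) (V : lmodType K) (br : V -> V -> V)
    (X I : V -> Prop) : V -> Prop :=
  fun u => X u /\ forall y, I y -> br y u = 0.

Definition Ann (K : fieldType) (V : lmodType K) (br : V -> V -> V)
    (X I : V -> Prop) : V -> Prop :=
  fun u => X u /\ forall y, I y -> br u y = 0 /\ br y u = 0.

(* Q (the whole space V) is a weak algebra of quotients of L. *)
Definition weak_algebra_of_quotients (K : fieldType) (V : lmodType K)
    (br : V -> V -> V) (L : V -> Prop) :=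
  forall q : V, q != 0 ->
    (exists x, L x /\ br q x != 0 /\ L (br q x)) \/
    (exists y, L y /\ br y q != 0 /\ L (br y q)).

Definition is_zero_set (K : fieldType) (V : lmodType K) (S : V -> Prop) :=
  forall u, S u -> u = 0.

(* Main.v *)
Require Import Defs.
From mathcomp Require Import all_boot all_algebra.
Local Open Scope ring_scope.
Import GRing.Theory.

Lemma br0l (K : fieldType) (Q : lmodType K) (br : Q -> Q -> Q) :
  bilinear_bracket br -> forall z, br 0 z = 0.
Proof.
move=> [H1 _] z; have h := H1 1 0 0 z.
rewrite scaler0 addr0 scale1r in h.
have := congr1 (fun t => t - br 0 z) h; rewrite subrr addrK => <-; done.
Qed.

Lemma br0r (K : fieldType) (Q : lmodType K) (br : Q -> Q -> Q) :
  bilinear_bracket br -> forall z, br z 0 = 0.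
Proof.
move=> [_ H2] z; have h := H2 1 z 0 0.
rewrite scaler0 addr0 scale1r in h.
have := congr1 (fun t => t - br z 0) h; rewrite subrr addrK => <-; done.
Qed.

Theorem proposition3p11 (K : fieldType) (Q : lmodType K) (br : Q -> Q -> Q)
    (L I : Q -> Prop) :
  right_leibniz br ->
  subalgebra br L ->
  weak_algebra_of_quotients br L ->
  ideal_of br L I ->
  (is_zero_set (Ann br L I) -> is_zero_set (Ann br (fun _ => True) I)) /\
  (is_zero_set (ran br L I) -> is_zero_set (ran br (fun _ => True) I)).
Proof.
move=> [Hb Hl] Hsub Hw [_ [HIL [HIr HIl]]].
have B0 := @br0l _ _ _ Hb; have B1 := @br0r _ _ _ Hb.
have Hl' : forall x y z, br (br x y) z = br x (br y z) + br (br x z) y.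
  by move=> x y z; rewrite Hl subrK.
split.
- move=> HZ q [_ Hq]; case: (eqVneq q 0) => // Hnz; exfalso.
  case: (Hw q Hnz) => [[x [Lx [nz Lu]]]|[x [Lx [nz Lu]]]].
  + move/eqP: nz; apply; apply: HZ; split => // y Iy; split.
    * rewrite Hl' (proj1 (Hq y Iy)) B0 addr0; exact: (proj1 (Hq _ (HIl _ _ Lx Iy))).
    * rewrite Hl (proj2 (Hq y Iy)) B0 (proj2 (Hq _ (HIr _ _ Iy Lx))) subrr //.
  + move/eqP: nz; apply; apply: HZ; split => // y Iy; split.
    * rewrite Hl' (proj1 (Hq y Iy)) B1 (proj2 (Hq _ (HIl _ _ Lx Iy))) addr0 //.
    * rewrite Hl (proj2 (Hq y Iy)) B0 (proj2 (Hq _ (HIr _ _ Iy Lx))) subrr //.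
- move=> HZ q [_ Hq]; case: (eqVneq q 0) => // Hnz; exfalso.
  case: (Hw q Hnz) => [[x [Lx [nz Lu]]]|[x [Lx [nz Lu]]]].
  + move/eqP: nz; apply; apply: HZ; split => // y Iy.
    rewrite Hl (Hq y Iy) B0 (Hq _ (HIr _ _ Iy Lx)) subrr //.
  + move/eqP: nz; apply; apply: HZ; split => // y Iy.
    rewrite Hl (Hq y Iy) B0 (Hq _ (HIr _ _ Iy Lx)) subrr //.
Qed.
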